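(* Let $\mathcal{G}$ be a lattice of languages over a finite alphabet $A$ and $\tau:2^{A^*}\to Q$ a nice rating map. Let $S\subseteq Q$ be the set of all $s\in Q$ such that $\{\varepsilon\}$ is not $\mathcal{G}$-separable from $\tau_*^{-1}(s)$. Then $\iota_{\mathcal{G}}[\tau]=\sum_{s\in S}s$.
   Context: Fix a finite alphabet $A$. A lattice is a class of languages containing $\emptyset$ and $A^*$ and closed under union and intersection. $L_1$ is $\mathcal{G}$-separable from $L_2$ if some $K\in\mathcal{G}$ satisfies $L_1\subseteq K$ and $K\cap L_2=\emptyset$. A rating algebra is a finite commutative idempotent monoid $(Q,+)$ with neutral element $0_Q$, ordered by $q\le r$ iff $q+r=r$. A rating map is $\tau:2^{A^*}\to Q$ with $\tau(\emptyset)=0_Q$ and $\tau(K_1\cup K_2)=\tau(K_1)+\tau(K_2)$; it is nice if every $K\subseteq A^*$ has a finite subset $F$ with $\tau(K)=\tau(F)$. $\tau_*:A^*\to Q$ is $w\mapsto\tau(\{w\})$. A $\mathcal{G}$-identity is a language $L\in\mathcal{G}$ with $\varepsilon\in L$; there exists a $\mathcal{G}$-identity $L$ with $\tau(L)\le\tau(L')$ for every $\mathcal{G}$-identity $L'$, and $\iota_{\mathcal{G}}[\tau]$ denotes $\tau(L)$ for any such $L$. *)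

(* Defs.v *)
From HB Require Import structures.
From mathcomp Require Import all_boot all_order all_algebra.
Set Implicit Arguments. Unset Strict Implicit. Unset Printing Implicit Defensive.
Import GRing.Theory.
Local Open Scope ring_scope.

Definition lang (A : finType) := seq A -> Prop.

Definition lang0 {A : finType} : lang A := fun _ => False.
Definition langT {A : finType} : lang A := fun _ => True.
Definition langU {A : finType} (K1 K2 : lang A) : lang A := fun w => K1 w \/ K2 w.
Definition langI {A : finType} (K1 K2 : lang A) : lang A := fun w => K1 w /\ K2 w.
Definition lang_of_seq {A : finType} (F : seq (seq A)) : lang A := fun w => w \in F.

Definition is_lattice {A : finType} (G : lang A -> Prop) : Prop :=
  [/\ G lang0, G langT,
      (forall K1 K2, G K1 -> G K2 -> G (langU K1 K2)) &
      (forall K1 K2, G K1 -> G K2 -> G (langI K1 K2))].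

(* A rating algebra: a finite commutative idempotent monoid (Q,+,0). *)
Definition idempotent_add (Q : finNmodType) : Prop := forall q : Q, q + q = q.

Definition rle {Q : finNmodType} (q r : Q) : Prop := q + r = r.

Definition is_rating_map {A : finType} {Q : finNmodType} (tau : lang A -> Q) : Prop :=
  tau lang0 = 0 /\ forall K1 K2, tau (langU K1 K2) = tau K1 + tau K2.

Definition is_nice {A : finType} {Q : finNmodType} (tau : lang A -> Q) : Prop :=
  forall K : lang A, exists F : seq (seq A),
    (forall w, w \in F -> K w) /\ tau K = tau (lang_of_seq F).

Definition tau_star {A : finType} {Q : finNmodType} (tau : lang A -> Q) (w : seq A) : Q :=
  tau (fun v => v = w).
Definition tau_star_inv {A : finType} {Q : finNmodType} (tau : lang A -> Q) (s : Q) : lang A :=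
  fun w => tau_star tau w = s.

Definition separable {A : finType} (G : lang A -> Prop) (L1 L2 : lang A) : Prop :=
  exists K, G K /\ (forall w, L1 w -> K w) /\ (forall w, K w -> ~ L2 w).

Definition eps_lang {A : finType} : lang A := fun w => w = [::].

Definition G_identity {A : finType} (G : lang A -> Prop) (L : lang A) : Prop :=
  G L /\ L [::].

(* [is_iota G tau q]: q = iota_G[tau], i.e. q = tau(L) for some G-identity L
   with tau(L) <= tau(L') for every G-identity L'.  (By antisymmetry of the
   order, such a q is unique.) *)
Definition is_iota {A : finType} {Q : finNmodType} (G : lang A -> Prop)
    (tau : lang A -> Q) (q : Q) : Prop :=
  exists L, G_identity G L /\ (forall L', G_identity G L' -> rle (tau L) (tau L'))
            /\ q = tau L.

(* Main.v *)
Require Import Defs.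
From mathcomp Require Import all_boot all_order all_algebra.
From Stdlib Require Import Classical FunctionalExtensionality PropExtensionality.
Local Open Scope ring_scope.
Import GRing.Theory.

Lemma lang_ext (A : finType) (K1 K2 : lang A) :
  (forall w, K1 w <-> K2 w) -> K1 = K2.
Proof.
move=> H; apply: functional_extensionality => w; apply: propositional_extensionality; exact: H.
Qed.

Lemma tau_mono (A : finType) (Q : finNmodType) (tau : lang A -> Q) (K K' : lang A) :
  is_rating_map tau -> (forall w, K w -> K' w) -> tau K + tau K' = tau K'.
Proof.
move=> [_ HU] Hs; rewrite -HU; congr tau; apply: lang_ext => w; split.
  by case=> // /Hs.
by move=> h; right.
Qed.

Lemma lub (Q : finNmodType) (a b c : Q) : a + c = c -> b + c = c -> (a + b) + c = c.
Proof. by move=> h1 h2; rewrite -addrA h2 h1. Qed.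

Theorem lemma10p3 (A : finType) (Q : finNmodType) (G : lang A -> Prop)
    (tau : lang A -> Q) (S : {set Q}) :
  is_lattice G -> idempotent_add Q -> is_rating_map tau -> is_nice tau ->
  (forall s : Q, s \in S <-> ~ separable G eps_lang (tau_star_inv tau s)) ->
  is_iota G tau (\sum_(s in S) s).
Proof.
move=> [G0 GT GU GI] Hid Hr Hn HS.
set sig := \sum_(s in S) s.
have inS : forall s, s \in S -> s + sig = sig.
  by move=> s sS; rewrite /sig (bigD1 s) //= addrA Hid.
have Lex : forall l : seq Q, (forall s, s \in l -> s \notin S) ->
    exists K, G K /\ K [::] /\ forall w, K w -> forall s, s \in l -> tau_star tau w <> s.
  elim=> [|s l IH] Hl.
    by exists langT; split=> //.
  have [K [GK [HK1 HK2]]] := IH (fun x hx => Hl x (mem_behead (s:=s::l) hx)).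
  have sep : separable G eps_lang (tau_star_inv tau s).
    apply: NNPP => h; have := Hl s (mem_head _ _); by move/negP; apply; apply/HS.
  case: sep => [Ks [GKs [H1 H2]]].
  exists (langI K Ks); split; first exact: GI.
  split; first by split=> //; apply: H1.
  move=> w [Kw Ksw] x; rewrite in_cons => /orP [/eqP -> | xl].
    exact: H2.
  exact: HK2.
have hen : forall s, s \in enum (~: S) -> s \notin S by move=> s; rewrite mem_enum inE.
have [L [GL [L0 HL]]] := Lex (enum (~: S)) hen.
have Lin : forall w, L w -> tau_star tau w \in S.
  move=> w Lw; apply: NNPP => h; apply: (HL w Lw (tau_star tau w)) => //.
  by rewrite mem_enum inE; apply/negP.
have upper : forall L', G_identity G L' -> sig + tau L' = tau L'.
  move=> L' [GL' L'0]; rewrite /sig.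
  apply: (big_ind (fun x => x + tau L' = tau L')); first by rewrite add0r.
    by move=> x y; apply: lub.
  move=> s sS.
  have : ~ separable G eps_lang (tau_star_inv tau s) by apply/HS.
  move=> nsep.
  have [w [L'w ws]] : exists w, L' w /\ tau_star tau w = s.
    apply: NNPP => h; apply: nsep; exists L'; split=> //; split.
      by move=> w ->.
    by move=> w Lw ew; apply: h; exists w.
  rewrite -ws; apply: tau_mono => // v ->; done.
have below : tau L + sig = sig.
  have [F [HF ->]] := Hn L.
  have : forall w, w \in F -> L w by [].
  elim: F {HF} => [|x F IH] HF.
    have -> : lang_of_seq [::] = @lang0 A by apply: lang_ext.
    by rewrite Hr.1 add0r.
  have -> : lang_of_seq (x :: F) = langU (fun v => v = x) (lang_of_seq F).
    apply: lang_ext => w; rewrite /lang_of_seq /langU in_cons; split.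
      by move=> /orP [/eqP ->|h]; [left|right].
    by case=> [->|->]; rewrite ?eqxx ?orbT.
  rewrite Hr.2; apply: lub.
    by apply: inS; apply: Lin; apply: HF; apply: mem_head.
  by apply: IH => w hw; apply: HF; rewrite in_cons hw orbT.
have eq : tau L = sig.
  have := upper L (conj GL L0); rewrite addrC below => ->; done.
exists L; split; first by split.
split; last by rewrite eq.
move=> L' HL'; rewrite /rle eq; exact: upper.
Qed.
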